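(* Let $H=\{\underline z\in\mathbb{C}^3: z_1+z_2+z_3=0\}$ and $p(Z)=Z^3$. If $\underline z\in H$ is not a complex scalar multiple of a vector with real entries, then $W_p^{\circ n}(\underline z)$ is defined for all $n\ge0$ and converges to the zero vector; the convergence is linear with rate $2/3$, i.e. $W_p^{\circ n}(\underline z)\neq 0$ for all $n$ and $\|W_p^{\circ(n+1)}(\underline z)\|/\|W_p^{\circ n}(\underline z)\|\to 2/3$ (for any norm on $\mathbb{C}^3$).
   Context: For a monic polynomial $p\in\mathbb{C}[Z]$ of degree $d$, the Weierstrass map $W_p$ is the partially defined map $\mathbb{C}^d\setminus\Delta\to\mathbb{C}^d$, $\underline z\mapsto \underline z'$ with $z'_k=z_k-\dfrac{p(z_k)}{\prod_{j\ne k}(z_k-z_j)}$, where $\Delta=\{\underline z\in\mathbb{C}^d: z_j=z_k\text{ for some }j<k\}$. *)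

(* Defs.v *)
From HB Require Import structures.
From mathcomp Require Import all_boot all_order all_algebra.
From mathcomp Require Import complex.
From mathcomp Require Import reals.
Set Implicit Arguments. Unset Strict Implicit. Unset Printing Implicit Defensive.
Import Order.TTheory GRing.Theory Num.Theory.
Local Open Scope ring_scope.

(* Vectors of C^d are row vectors 'rV[F]_d, coordinates z 0 k, k : 'I_d. *)

Definition off_diagonal (F : fieldType) (d : nat) (z : 'rV[F]_d) : bool :=
  [forall j : 'I_d, forall k : 'I_d, (j != k) ==> (z 0 j != z 0 k)].

Definition weierstrass (F : fieldType) (d : nat) (p : {poly F})
    (z : 'rV[F]_d) : option 'rV[F]_d :=
  if off_diagonal z then
    Some (\row_(k < d) (z 0 k - p.[z 0 k] / \prod_(j < d | j != k) (z 0 k - z 0 j)))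
  else None.

Fixpoint weierstrass_iter (F : fieldType) (d : nat) (p : {poly F}) (n : nat)
    (z : 'rV[F]_d) : option 'rV[F]_d :=
  match n with
  | 0 => Some z
  | n'.+1 => match weierstrass_iter p n' z with
             | Some w => weierstrass p w
             | None => None
             end
  end.

Definition cmod (R : rcfType) (a : R[i]) : R := complex.Re `|a|.

Definition is_norm (R : rcfType) (d : nat) (N : 'rV[R[i]]_d -> R) : Prop :=
  [/\ forall v, N v = 0 -> v = 0,
      forall (a : R[i]) v, N (a *: v) = cmod a * N v
    & forall v w, N (v + w) <= N v + N w].

Definition seq_cvg (R : realType) (u : nat -> R) (l : R) : Prop :=
  forall eps : R, 0 < eps -> exists N : nat, forall n : nat, (N <= n)%N -> `|u n - l| < eps.

(* Main.v *)
From HB Require Import structures.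
From mathcomp Require Import all_boot all_order all_algebra.
From mathcomp Require Import complex.
From mathcomp Require Import reals.
From mathcomp Require Import ring lra.
From mathcomp Require Import all_classical all_analysis.
Require Import Defs.
Import Order.TTheory GRing.Theory Num.Theory.
Local Open Scope ring_scope.
Local Open Scope classical_set_scope.
Local Open Scope complex_scope.
Import numFieldNormedType.Exports.
Set Implicit Arguments. Unset Strict Implicit. Unset Printing Implicit Defensive.
Definition vecw (F : fieldType) (w u v : F) : 'rV[F]_3 :=
  \row_(k < 3) (u * w ^+ k + v * w ^+ (2 * k)).

Lemma modrel (F : fieldType) (w x Q : F) : w^+2 + w + 1 = 0 -> x = (w^+2+w+1)*Q -> x = 0.
Proof. by move=> h ->; rewrite h mul0r. Qed.

Lemma prodk (F : fieldType) (f : 'I_3 -> F) :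
  [/\ \prod_(j < 3 | j != 0) f j = f 1 * f 2,
      \prod_(j < 3 | j != 1) f j = f 0 * f 2 &
      \prod_(j < 3 | j != 2) f j = f 0 * f 1].
Proof.
have e1 : lift ord0 ord0 = 1 :> 'I_3 by apply/val_inj.
have e2 : lift ord0 (lift ord0 ord0) = 2 :> 'I_3 by apply/val_inj.
split; rewrite big_mkcond !big_ord_recl big_ord0 /= ?e1 ?e2 ?(mul1r, mulr1) //.
Qed.

Section Alg.
Variables (F : fieldType) (w : F).
Hypothesis hw : w^+2 + w + 1 = 0.
Hypothesis h3 : (3 : F) != 0.

Lemma vecw0 u v : vecw w u v 0 0 = u + v.
Proof. by rewrite mxE /= expr0 !mulr1. Qed.
Lemma vecw1 u v : vecw w u v 0 1 = u * w + v * w^+2.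
Proof. by rewrite mxE /= expr1. Qed.
Lemma vecw2 u v : vecw w u v 0 2 = u * w^+2 + v * w^+4.
Proof. by rewrite mxE. Qed.

Definition stepF (p : F * F) : F * F :=
  let: (u, v) := p in
  (u * (2 * u^+3 - v^+3) / (3 * (u^+3 - v^+3)),
   v * (2 * v^+3 - u^+3) / (3 * (v^+3 - u^+3))).

Lemma fin_eq (z D N E a : F) : D != 0 -> E != 0 -> (z*D - z^+3)*E = N*D ->
  a = N/E -> z - z^+3/D = a.
Proof.
move=> hD hE key ->; apply/eqP; rewrite -subr_eq0; apply/eqP.
have -> : z - z^+3/D - N/E = ((z*D - z^+3)*E - N*D)/(D*E) by field; rewrite hD hE.
by rewrite key subrr mul0r.
Qed.

Lemma weier_step u v : u^+3 != v^+3 ->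
  weierstrass ('X^3 : {poly F}) (vecw w u v) =
  Some (vecw w (stepF (u, v)).1 (stepF (u, v)).2).
Proof.
move=> huv.
have hE : 3 * (u^+3 - v^+3) != 0 by rewrite mulf_neq0 // subr_eq0.
have hE' : 3 * (v^+3 - u^+3) != 0 by rewrite mulf_neq0 // subr_eq0 eq_sym.
set z0 := u + v. set z1 := u * w + v * w^+2. set z2 := u * w^+2 + v * w^+4.
have I10 : (z0 - z1) * (z0 - z2) * (u * 1 - v * 1) = 3 * (u^+3 - v^+3).
  apply/eqP; rewrite -subr_eq0; apply/eqP; apply: (modrel hw (Q := (2%:R*v^+3 - u*v^+2 + u^+2*v - 2%:R*u^+3 - 2%:R*w*v^+3 + 2%:R*w*u*v^+2 - w*u^+2*v + w*u^+3 + w^+2*v^+3 - w^+2*u^+2*v + w^+3*v^+3 - 2%:R*w^+3*u*v^+2 + w^+3*u^+2*v - w^+4*v^+3 + w^+4*u*v^+2))).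
  rewrite /z0 /z1 /z2; ring.
have I20 : (z0 * ((z0 - z1) * (z0 - z2)) - z0^+3) * (3 * (u^+3 - v^+3)) = (u * (2 * u^+3 - v^+3) * 1 - v * (2 * v^+3 - u^+3) * 1) * ((z0 - z1) * (z0 - z2)).
  apply/eqP; rewrite -subr_eq0; apply/eqP; apply: (modrel hw (Q := (2%:R*v^+6 + 5%:R*u*v^+5 + 4%:R*u^+2*v^+4 - 4%:R*u^+4*v^+2 - 5%:R*u^+5*v - 2%:R*u^+6 - 2%:R*w*v^+6 - 4%:R*w*u*v^+5 - w*u^+2*v^+4 + 2%:R*w*u^+3*v^+3 + 2%:R*w*u^+4*v^+2 + 2%:R*w*u^+5*v + w*u^+6 + w^+2*v^+6 + 3%:R*w^+2*u*v^+5 + 2%:R*w^+2*u^+2*v^+4 - 2%:R*w^+2*u^+3*v^+3 - 3%:R*w^+2*u^+4*v^+2 - w^+2*u^+5*v + w^+3*v^+6 + w^+3*u*v^+5 - 2%:R*w^+3*u^+2*v^+4 - 2%:R*w^+3*u^+3*v^+3 + w^+3*u^+4*v^+2 + w^+3*u^+5*v - w^+4*v^+6 - 2%:R*w^+4*u*v^+5 + 2%:R*w^+4*u^+3*v^+3 + w^+4*u^+4*v^+2))).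
  rewrite /z0 /z1 /z2; ring.
have I11 : (z1 - z0) * (z1 - z2) * (u * w - v * w^+2) = 3 * (u^+3 - v^+3).
  apply/eqP; rewrite -subr_eq0; apply/eqP; apply: (modrel hw (Q := (3%:R*v^+3 - 3%:R*u^+3 - 3%:R*w*v^+3 + 3%:R*w*u^+3 - w^+2*u^+2*v - w^+2*u^+3 + 3%:R*w^+3*v^+3 + 2%:R*w^+3*u^+2*v - 2%:R*w^+4*v^+3 - w^+4*u^+2*v - w^+5*v^+3 + w^+6*v^+3))).
  rewrite /z0 /z1 /z2; ring.
have I21 : (z1 * ((z1 - z0) * (z1 - z2)) - z1^+3) * (3 * (u^+3 - v^+3)) = (u * (2 * u^+3 - v^+3) * w - v * (2 * v^+3 - u^+3) * w^+2) * ((z1 - z0) * (z1 - z2)).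
  apply/eqP; rewrite -subr_eq0; apply/eqP; apply: (modrel hw (Q := (2%:R*w^+2*u^+2*v^+4 + 2%:R*w^+2*u^+3*v^+3 - w^+2*u^+5*v - w^+2*u^+6 + 3%:R*w^+3*u*v^+5 - w^+3*u^+2*v^+4 - 3%:R*w^+3*u^+3*v^+3 - 3%:R*w^+3*u^+4*v^+2 - w^+3*u^+5*v + w^+4*v^+6 - 3%:R*w^+4*u*v^+5 + 2%:R*w^+4*u^+2*v^+4 + w^+4*u^+3*v^+3 + 3%:R*w^+4*u^+4*v^+2 - w^+4*u^+5*v - w^+5*v^+6 + 3%:R*w^+5*u*v^+5 + 2%:R*w^+5*u^+3*v^+3 - 3%:R*w^+5*u^+4*v^+2 + w^+6*v^+6 - 2%:R*w^+6*u^+3*v^+3))).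
  rewrite /z0 /z1 /z2; ring.
have I12 : (z2 - z0) * (z2 - z1) * (u * w^+2 - v * w^+4) = 3 * (u^+3 - v^+3).
  apply/eqP; rewrite -subr_eq0; apply/eqP; apply: (modrel hw (Q := (3%:R*v^+3 - 3%:R*u^+3 - 3%:R*w*v^+3 + 3%:R*w*u^+3 + 3%:R*w^+3*v^+3 + w^+3*u^+2*v - 2%:R*w^+3*u^+3 - 3%:R*w^+4*v^+3 + w^+4*u*v^+2 - w^+4*u^+2*v + w^+4*u^+3 - 2%:R*w^+5*u*v^+2 - w^+5*u^+2*v + 2%:R*w^+6*v^+3 + w^+6*u^+2*v - 2%:R*w^+7*v^+3 + 2%:R*w^+7*u*v^+2 + w^+8*v^+3 - w^+8*u*v^+2 + w^+9*v^+3 - w^+10*v^+3))).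
  rewrite /z0 /z1 /z2; ring.
have I22 : (z2 * ((z2 - z0) * (z2 - z1)) - z2^+3) * (3 * (u^+3 - v^+3)) = (u * (2 * u^+3 - v^+3) * w^+2 - v * (2 * v^+3 - u^+3) * w^+4) * ((z2 - z0) * (z2 - z1)).
  apply/eqP; rewrite -subr_eq0; apply/eqP; apply: (modrel hw (Q := (- 2%:R*w^+3*u^+2*v^+4 - 2%:R*w^+3*u^+3*v^+3 + w^+3*u^+5*v + w^+3*u^+6 - 2%:R*w^+4*u*v^+5 + 2%:R*w^+4*u^+2*v^+4 + 4%:R*w^+4*u^+3*v^+3 + w^+4*u^+4*v^+2 - w^+4*u^+5*v - 2%:R*w^+4*u^+6 + w^+5*u*v^+5 - w^+5*u^+2*v^+4 + w^+5*u^+4*v^+2 + 2%:R*w^+5*u^+5*v - w^+6*v^+6 + 3%:R*w^+6*u*v^+5 + 4%:R*w^+6*u^+2*v^+4 - w^+6*u^+3*v^+3 - 3%:R*w^+6*u^+4*v^+2 - 5%:R*w^+6*u^+5*v + w^+7*v^+6 - 4%:R*w^+7*u*v^+5 + w^+7*u^+3*v^+3 + 2%:R*w^+7*u^+4*v^+2 + w^+8*v^+6 + 5%:R*w^+8*u*v^+5 - 2%:R*w^+8*u^+3*v^+3 - 4%:R*w^+8*u^+4*v^+2 - 2%:R*w^+9*v^+6 + w^+9*u^+3*v^+3 + 2%:R*w^+10*v^+6 - w^+10*u^+3*v^+3))).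
  rewrite /z0 /z1 /z2; ring.
have Dn : forall D a, D * a = 3 * (u^+3 - v^+3) -> D != 0.
  by move=> D a h; apply: contraNneq hE => h0; rewrite -h h0 mul0r.
have D0n := Dn _ _ I10. have D1n := Dn _ _ I11. have D2n := Dn _ _ I12.
have [n01 n02] : z0 != z1 /\ z0 != z2.
  by move: D0n; rewrite mulf_eq0 negb_or !subr_eq0 => /andP[].
have n12 : z1 != z2.
  by move: D1n; rewrite mulf_eq0 negb_or !subr_eq0 => /andP[].
have c0 : vecw w u v 0 0 = z0 by rewrite vecw0.
have c1 : vecw w u v 0 1 = z1 by rewrite vecw1.
have c2 : vecw w u v 0 2 = z2 by rewrite vecw2.
have o0 : forall h : (0 < 3)%N, Ordinal h = 0 by move=> h; apply/val_inj.
have o1 : forall h : (1 < 3)%N, Ordinal h = 1 by move=> h; apply/val_inj.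
have o2 : forall h : (2 < 3)%N, Ordinal h = 2 by move=> h; apply/val_inj.
rewrite /weierstrass.
have -> : off_diagonal (vecw w u v).
  apply/forallP => j; apply/forallP => k; apply/implyP.
  case: j => [[|[|[|j]]] hj] //; case: k => [[|[|[|k]]] hk] //;
    rewrite ?o0 ?o1 ?o2 ?c0 ?c1 ?c2 // => _; by rewrite eq_sym.
congr Some; apply/rowP => k; rewrite [LHS]mxE [RHS]mxE.
have [p0 p1 p2] := prodk (fun j => vecw w u v 0 k - vecw w u v 0 j).
case: k p0 p1 p2 => [[|[|[|k]]] hk] //; rewrite ?o0 ?o1 ?o2 => p0 p1 p2.
- rewrite p0 c0 c1 c2 hornerXn; apply: (fin_eq D0n hE I20); rewrite /stepF /=; field.
  by rewrite h3 !subr_eq0 huv eq_sym huv.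
- rewrite p1 c0 c1 c2 hornerXn; apply: (fin_eq D1n hE I21); rewrite /stepF /=; field.
  by rewrite h3 !subr_eq0 huv eq_sym huv.
- rewrite p2 c0 c1 c2 hornerXn; apply: (fin_eq D2n hE I22); rewrite /stepF /=; field.
  by rewrite h3 !subr_eq0 huv eq_sym huv.
Qed.
End Alg.
Lemma seq_cvgP (R : realType) (u : nat -> R) l : seq_cvg u l <-> (u @ \oo --> l).
Proof.
rewrite cvgrPdist_lt; split.
  move=> H e e0; have [N HN] := H e e0; exists N => // n /= Nn; rewrite distrC; exact: HN.
move=> H e e0; have [N _ HN] := H e e0; exists N => n Nn; rewrite distrC; exact: HN.
Qed.

Lemma cvg_sqbound (R : realType) (x : nat -> R) l K k : 0 <= k -> k < 1 ->
  forall M, (forall n, (M <= n)%N -> (x n - l) ^+ 2 <= K * k ^+ n) -> seq_cvg x l.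
Proof.
move=> k0 k1 M hb e e0.
have /seq_cvgP hk : (fun n => k ^+ n) @ \oo --> (0 : R).
  by apply: cvg_expr; rewrite ger0_norm.
have he : 0 < e ^+ 2 / (`|K| + 1) by rewrite divr_gt0 // ?exprn_gt0 // ltr_wpDl.
have [N HN] := hk _ he; exists (maxn N M) => n; rewrite geq_max => /andP[Nn Mn].
have := HN n Nn; rewrite subr0 ger0_norm ?exprn_ge0 // => hkn.
have hK : K * k ^+ n <= `|K| * k ^+ n by rewrite ler_wpM2r ?exprn_ge0 ?ler_norm.
have : (x n - l) ^+ 2 < e ^+ 2.
  apply: (le_lt_trans (hb n Mn)); apply: (le_lt_trans hK).
  rewrite ltr_pdivlMr ?ltr_wpDl // in hkn.
  apply: le_lt_trans hkn. rewrite mulrDr mulr1 mulrC lerDl exprn_ge0 //.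
rewrite -real_normK ?num_real // => h.
apply: contraTT h; rewrite -!leNgt => h; rewrite lerXn2r ?nnegrE //; lra.
Qed.

Lemma powid (F : fieldType) (a b : F) (N k : nat) : b != 0 ->
  a ^+ 2 / b ^+ (2 * N) * (b ^+ 2) ^+ (N + k) = (b ^+ k * a) ^+ 2.
Proof.
move=> b0; rewrite -exprM mulnDr exprD mulrA mulfVK ?expf_neq0 //.
by rewrite exprMn -exprM mulnC exprM mulrC.
Qed.

Lemma cvg_ratio0 (R : realType) (x : nat -> R) l : (forall n, 0 < x n) -> 0 <= l -> l < 1 ->
  seq_cvg (fun n => x n.+1 / x n) l -> seq_cvg x 0.
Proof.
move=> xp l0 l1 hr.
set q := (1 + l) / 2.
have [N HN] := hr ((1 - l) / 2) ltac:(lra).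
have hq : forall n, (N <= n)%N -> x n.+1 <= q * x n.
  move=> n Nn; have := HN n Nn; rewrite ltr_norml => /andP[_] h.
  have : x n.+1 / x n < q by rewrite /q; lra.
  by rewrite ltr_pdivrMr // mulrC => /ltW.
have hind : forall k, x (N + k)%N <= q ^+ k * x N.
  elim=> [|k IH]; first by rewrite addn0 expr0 mul1r.
  rewrite addnS exprS -mulrA; apply: (le_trans (hq _ (leq_addr _ _))).
  by rewrite ler_wpM2l // /q; lra.
apply: (@cvg_sqbound R (fun n => x n) 0 ((x N) ^+ 2 / q ^+ (2 * N)) (q ^+ 2) _ _ N).
- by rewrite exprn_ge0 // /q; lra.
- rewrite /q; nra.
move=> n hn; rewrite subr0.
rewrite -(subnKC hn); have := hind (n - N)%N; set k := (n - N)%N => h.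
  have q0 : 0 < q by rewrite /q; lra.
  have -> : x N ^+ 2 / q ^+ (2 * N) * q ^+ 2 ^+ (N + k) = (q ^+ k * x N) ^+ 2.
    by rewrite powid // gt_eqF.
  rewrite lerXn2r // nnegrE; first exact: ltW.
  by rewrite mulr_ge0 // ?exprn_ge0 // ltW.
Qed.
Section An.
Variable R : realType.
Local Notation C := R[i].

Lemma cmodE (a : C) : cmod a = Num.sqrt (complex.Re a ^+ 2 + complex.Im a ^+ 2).
Proof. by rewrite /cmod normc_def. Qed.
Lemma cmodC (a : C) : (cmod a)%:C = `|a|.
Proof. by rewrite cmodE normc_def. Qed.
Lemma cmod_ge0 (a : C) : 0 <= cmod a.
Proof. by rewrite cmodE sqrtr_ge0. Qed.
Lemma cmodM (a b : C) : cmod (a * b) = cmod a * cmod b.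
Proof. by apply: (@complexI R); rewrite rmorphM /= !cmodC normrM. Qed.
Lemma cmodD (a b : C) : cmod (a + b) <= cmod a + cmod b.
Proof. by rewrite -lecR rmorphD /= !cmodC ler_normD. Qed.
Lemma cmodN (a : C) : cmod (- a) = cmod a.
Proof. by apply: (@complexI R); rewrite !cmodC normrN. Qed.
Lemma cmod_eq0 (a : C) : (cmod a == 0) = (a == 0).
Proof. by rewrite -(inj_eq (@complexI R)) cmodC normr_eq0. Qed.
Lemma cmodR (x : R) : cmod x%:C = `|x|.
Proof. by rewrite cmodE /= expr0n /= addr0 sqrtr_sqr. Qed.
Lemma cmodX (a : C) n : cmod (a ^+ n) = cmod a ^+ n.
Proof. by apply: (@complexI R); rewrite rmorphXn /= !cmodC normrX. Qed.
Lemma cmodV (a : C) : cmod (a^-1) = (cmod a)^-1.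
Proof. by apply: (@complexI R); rewrite fmorphV /= !cmodC normfV. Qed.
Lemma cmod2 (a : C) : cmod a ^+ 2 = complex.Re a ^+ 2 + complex.Im a ^+ 2.
Proof. by rewrite cmodE sqr_sqrtr // addr_ge0 // sqr_ge0. Qed.
End An.

Lemma ord3_0 (h : (0 < 3)%N) : Ordinal h = 0. Proof. exact: val_inj. Qed.
Lemma ord3_1 (h : (1 < 3)%N) : Ordinal h = 1. Proof. exact: val_inj. Qed.
Lemma ord3_2 (h : (2 < 3)%N) : Ordinal h = 2. Proof. exact: val_inj. Qed.

Section Alg2.
Variables (F : fieldType) (w : F).
Hypothesis hw : w^+2 + w + 1 = 0.
Hypothesis h3 : (3 : F) != 0.

Lemma vecw_decomp (z : 'rV[F]_3) : z 0 0 + z 0 1 + z 0 2 = 0 ->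
  z = vecw w ((z 0 0 + z 0 1 * w^+2 + z 0 2 * w) / 3)
             ((z 0 0 + z 0 1 * w + z 0 2 * w^+2) / 3).
Proof.
move=> hs; have hz2 : z 0 2 = - z 0 0 - z 0 1.
  by apply/eqP; rewrite -subr_eq0; apply/eqP; rewrite -hs; ring.
apply/rowP => k; rewrite [RHS]mxE.
case: k => [[|[|[|k]]] hk] //; rewrite ?ord3_0 ?ord3_1 ?ord3_2 /= hz2;
  set z0 := z 0 0; set z1 := z 0 1; apply/esym/eqP; rewrite -subr_eq0; apply/eqP.
- by apply: (modrel hw (Q := (- z0) / 3)); field.
- by apply: (modrel hw (Q := (- 3%:R*z1 + 3%:R*w*z1 + w*z0 - w^+2*z1 - w^+2*z0) / 3)); field.
- by apply: (modrel hw (Q := (3%:R*z1 + 3%:R*z0 - 3%:R*w*z1 - 3%:R*w*z0 + w^+2*z0 + 2%:R*w^+3*z1 + w^+3*z0 - w^+4*z1 - w^+4*z0) / 3)); field.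
Qed.

Lemma vecw_eq0 u v : vecw w u v = 0 -> u = 0.
Proof.
move=> h.
have e : 3 * u = vecw w u v 0 0 + vecw w u v 0 1 * w^+2 + vecw w u v 0 2 * w.
  rewrite vecw0 vecw1 vecw2; apply/eqP; rewrite -subr_eq0; apply/eqP.
  by apply: (modrel hw (Q := - (v - 2%:R*u - w*v + 2%:R*w*u + w^+3*v))); ring.
move: e; rewrite h !mxE !mul0r !addr0 => /eqP; rewrite mulf_eq0 (negbTE h3) /=.
by move/eqP.
Qed.
End Alg2.

Lemma vecw_scale (F : fieldType) (w u t : F) : vecw w u (t * u) = u *: vecw w 1 t.
Proof. by apply/rowP => k; rewrite !mxE; ring. Qed.
Lemma vecw_sub (F : fieldType) (w t : F) : vecw w 1 t - vecw w 1 0 = t *: vecw w 0 1.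
Proof. by apply/rowP => k; rewrite !mxE; ring. Qed.

Section Dyn.
Variable R : realType.
Local Notation C := R[i].

Lemma cmod1 : cmod (1 : C) = 1.
Proof. by rewrite (cmodR (1 : R)) normr1. Qed.

Lemma blaschke (s : C) : cmod s < 1 ->
  cmod ((1 - 2 * s) / (2 - s)) ^+ 2 <= 1 - (1 - cmod s ^+ 2) / 3.
Proof.
move=> hs.
rewrite cmodM cmodV exprMn exprVn !cmod2.
have : cmod s ^+ 2 < 1 by have := cmod_ge0 s; nra.
rewrite cmod2; case: s hs => a b /= _ hab.
simpc.
have hd : 0 < (1 + 1 - a) ^+ 2 + b ^+ 2 by nra.
rewrite !sqrrN ler_pdivrMr //.
have ha : -1 < a by nra.
have h9 : 0 <= 9 - ((1 + 1 - a) ^+ 2 + b ^+ 2) by nra.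
have he : 0 <= 1 - (a ^+ 2 + b ^+ 2) by lra.
have := mulr_ge0 he h9; nra.
Qed.
Lemma cmodn (n : nat) : cmod (n%:R : C) = n%:R.
Proof. by rewrite -(rmorph_nat (real_complex R)) cmodR normr_nat. Qed.

Lemma onestep (u v : C) : u != 0 -> cmod (v / u) < 1 ->
  [/\ u ^+ 3 != v ^+ 3,
      (stepF (u, v)).1 = u * ((2 - (v/u)^+3) / (3 * (1 - (v/u)^+3))),
      (stepF (u, v)).1 != 0 &
      (stepF (u, v)).2 / (stepF (u, v)).1 = (v/u) * ((1 - 2 * (v/u)^+3) / (2 - (v/u)^+3))].
Proof.
move=> u0 ht; set t := v / u.
have hv : v = t * u by rewrite /t mulfVK.
set s := t ^+ 3.
have hs : cmod s < 1 by rewrite /s cmodX; have := cmod_ge0 t; rewrite -/t in ht; nra.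
have h1 : 1 - s != 0.
  by rewrite subr_eq0; apply/eqP => e; move: hs; rewrite -e cmod1 ltxx.
have h2 : 2 - s != 0.
  rewrite subr_eq0; apply/eqP => e; move: hs; rewrite -e (cmodn 2); lra.
have h3 : (3 : C) != 0 by rewrite pnatr_eq0.
have e1 : u ^+ 3 - v ^+ 3 = (1 - s) * u ^+ 3 by rewrite hv /s; ring.
have e2 : v ^+ 3 - u ^+ 3 = - ((1 - s) * u ^+ 3) by rewrite -e1; ring.
have e3 : 2 * u ^+ 3 - v ^+ 3 = (2 - s) * u ^+ 3 by rewrite hv /s; ring.
have e4 : 2 * v ^+ 3 - u ^+ 3 = - ((1 - 2 * s) * u ^+ 3) by rewrite hv /s; ring.
have u3 : u ^+ 3 != 0 by rewrite expf_neq0.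
have huv : u ^+ 3 != v ^+ 3 by rewrite -subr_eq0 e1 mulf_neq0.
rewrite /stepF /= e1 e2 e3 e4.
split => //.
- by field; rewrite h1 u0.
- by repeat (apply: mulf_neq0 || rewrite invr_eq0).
- by rewrite hv; field; rewrite h2 u0 h1.
Qed.
Fixpoint traj (p : C * C) (n : nat) : C * C :=
  if n is n'.+1 then stepF (traj p n') else p.

Lemma traj_inv (u0 v0 : C) : u0 != 0 -> cmod (v0 / u0) < 1 ->
  forall n, (traj (u0, v0) n).1 != 0 /\
    cmod ((traj (u0, v0) n).2 / (traj (u0, v0) n).1) ^+ 2 <=
      (1 - (1 - cmod (v0 / u0) ^+ 6) / 3) ^+ n * cmod (v0 / u0) ^+ 2.
Proof.
move=> hu0 hc0; set c0 := cmod (v0 / u0); set k := 1 - (1 - c0 ^+ 6) / 3.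
have c00 : 0 <= c0 := cmod_ge0 _.
have c06 : c0 ^+ 6 <= 1 by exact: exprn_ile1 c00 (ltW hc0).
have c6 : 0 <= c0 ^+ 6 by rewrite exprn_ge0.
have k0 : 0 <= k by rewrite /k; lra.
have k1 : k <= 1 by rewrite /k; lra.
elim=> [|n IH]; first by rewrite /= expr0 mul1r.
rewrite /=; case: (traj _ n) IH => u v /= [hu hb].
set t := v / u in hb *.
have kn : k ^+ n <= 1 by exact: exprn_ile1 k0 k1.
have ht0 := cmod_ge0 t.
have htc : cmod t <= c0.
  have : cmod t ^+ 2 <= c0 ^+ 2.
    apply: (le_trans hb); rewrite -[leRHS]mul1r; apply: ler_wpM2r => //.
    exact: exprn_ge0.
  move=> h; nra.
have ht1 : cmod t < 1 by lra.
have [_ _ hu' ht'] := onestep hu ht1.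
split => //; rewrite ht' -/t.
have hs : cmod (t ^+ 3) < 1 by rewrite cmodX; nra.
have hb' := blaschke hs.
rewrite cmodM exprMn.
apply: (le_trans (ler_wpM2l (exprn_ge0 2 ht0) hb')).
rewrite [k ^+ _.+1]exprSr [leRHS]mulrAC; apply: ler_pM => //.
- exact: exprn_ge0.
- have := cmod_ge0 (t ^+ 3); rewrite cmodX => h3.
  have : cmod t ^+ 3 < 1 by nra.
  move=> h; rewrite subr_ge0; nra.
rewrite /k cmodX -exprM /=.
have : cmod t ^+ 6 <= c0 ^+ 6 by rewrite lerXn2r ?nnegrE.
lra.
Qed.
End Dyn.

Section Core.
Variable R : realType.
Local Notation C := R[i].

Lemma cmod0 : cmod (0 : C) = 0.
Proof. by apply/eqP; rewrite cmod_eq0. Qed.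

Lemma cmod_dist (a b : C) : `|cmod a - cmod b| <= cmod (a - b).
Proof.
have h1 := cmodD (a - b) b; have h2 := cmodD (b - a) a.
rewrite subrK in h1; rewrite subrK in h2.
have e : cmod (b - a) = cmod (a - b) by rewrite -cmodN opprB.
rewrite e in h2; rewrite ler_norml; apply/andP; split; lra.
Qed.

Lemma sq_le (x y : R) : `|x| <= y -> x ^+ 2 <= y ^+ 2.
Proof. by move/ler_normlP => [h1 h2]; nra. Qed.

Variable N : 'rV[C]_3 -> R.
Hypothesis hN : is_norm N.

Lemma N0 : N 0 = 0.
Proof. by case: hN => _ hh _; rewrite -(scale0r (0 : 'rV[C]_3)) hh cmod0 mul0r. Qed.
Lemma NN v : N (- v) = N v.
Proof. by case: hN => _ hh _; rewrite -scaleN1r hh cmodN cmod1 mul1r. Qed.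
Lemma N_ge0 v : 0 <= N v.
Proof.
case: hN => _ _ ht; have := ht v (- v); rewrite subrr N0 NN; lra.
Qed.
Lemma N_gt0 v : v != 0 -> 0 < N v.
Proof.
move=> hv; rewrite lt_def N_ge0 andbT; apply/eqP => h.
by case: hN => hd _ _; move: hv; rewrite (hd _ h) eqxx.
Qed.
Lemma Ndist x y : `|N x - N y| <= N (x - y).
Proof.
case: hN => _ _ ht.
have h1 := ht (x - y) y; have h2 := ht (y - x) x.
rewrite subrK in h1; rewrite subrK in h2.
rewrite -[N (y - x)]NN opprB in h2.
rewrite ler_norml; apply/andP; split; lra.
Qed.
End Core.

Lemma frac_le (R : realType) (a b c d : R) : 0 <= a -> 0 < d -> a <= c -> d <= b -> a / b <= c / d.
Proof.
move=> a0 d0 ac db; have b0 : 0 < b by exact: (Order.POrderTheory.lt_le_trans d0 db).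
apply: ler_pM => //; first by rewrite invr_ge0 ltW.
by rewrite lef_pV2 ?posrE.
Qed.

Lemma cmod23 (R : realType) : cmod (2 / 3 : R[i]) = 2 / 3.
Proof. by rewrite cmodM cmodV !cmodn. Qed.

Lemma core (R : realType) (w : R[i]) (z : 'rV[R[i]]_3) :
  w ^+ 2 + w + 1 = 0 -> z 0 0 + z 0 1 + z 0 2 = 0 ->
  cmod ((z 0 0 + z 0 1 * w + z 0 2 * w^+2) / 3) <
    cmod ((z 0 0 + z 0 1 * w^+2 + z 0 2 * w) / 3) ->
  exists wn : nat -> 'rV[R[i]]_3,
    (forall n : nat, weierstrass_iter ('X^3 : {poly R[i]}) n z = Some (wn n)) /\
    (forall n : nat, wn n != 0) /\
    (forall N : 'rV[R[i]]_3 -> R, is_norm N ->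
       seq_cvg (fun n => N (wn n)) 0 /\
       seq_cvg (fun n => N (wn n.+1) / N (wn n)) (2 / 3)).
Proof.
move=> hw hs.
have h3 : (3 : R[i]) != 0 by rewrite pnatr_eq0.
have hz := vecw_decomp hw h3 hs.
move: hz; set u0 := (z 0 0 + z 0 1 * w^+2 + z 0 2 * w) / 3.
set v0 := (z 0 0 + z 0 1 * w + z 0 2 * w^+2) / 3 => hz hlt.
have hu0 : u0 != 0.
  by apply/eqP => e; move: hlt; rewrite e cmod0 ltNge cmod_ge0.
have hc0 : cmod (v0 / u0) < 1.
  have hu0' : 0 < cmod u0 by rewrite lt_def cmod_eq0 hu0 cmod_ge0.
  by rewrite cmodM cmodV ltr_pdivrMr // mul1r.
have inv := traj_inv hu0 hc0.
set c0 := cmod (v0 / u0) in hc0 inv; set k := 1 - _ in inv.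
have c00 : 0 <= c0 := cmod_ge0 _.
have c6 : 0 <= c0 ^+ 6 by rewrite exprn_ge0.
have c06 : c0 ^+ 6 <= 1 by exact: exprn_ile1 c00 (ltW hc0).
have k0 : 0 <= k by rewrite /k; lra.
have k1 : k <= 1 by rewrite /k; lra.
pose p n := traj (u0, v0) n.
pose t n := (p n).2 / (p n).1.
have pu n : (p n).1 != 0 by have [] := inv n.
have tb n : cmod (t n) ^+ 2 <= k ^+ n * c0 ^+ 2 by have [] := inv n.
have tc n : cmod (t n) <= c0.
  have := tb n; have := exprn_ile1 n k0 k1; have := cmod_ge0 (t n).
  have := exprn_ge0 2 c00; nra.
have t1 n : cmod (t n) < 1 by have := tc n; lra.
pose wn n := vecw w (p n).1 (p n).2.
have nz : forall n, wn n != 0.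
  move=> n; apply/eqP => /(vecw_eq0 hw h3) h0.
  by move: (pu n); rewrite h0 eqxx.
have kl1 : k < 1.
  have : c0 ^+ 6 < 1 by rewrite exprn_ilt1.
  rewrite /k; lra.
have ep n : p n.+1 = stepF ((p n).1, (p n).2) by rewrite /p /=; case: (traj (u0, v0) n).
exists wn; split.
  elim=> [|n IH]; first by rewrite /= hz.
  rewrite /= IH.
  have [huv _ _ _] := onestep (pu n) (t1 n).
  rewrite /wn (weier_step hw h3 huv) /p /=.
  by case: (traj (u0, v0) n).
split => // N hN.
pose X n := vecw w 1 (t n).
pose A := vecw w (1 : R[i]) 0. pose B := vecw w (0 : R[i]) 1.
have hwX n : wn n = (p n).1 *: X n.
  by rewrite /wn /X -vecw_scale /t mulfVK.
have NW n : N (wn n) = cmod (p n).1 * N (X n).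
  by case: hN => _ hh _; rewrite hwX hh.
have X0 n : X n != 0.
  by apply/eqP => /(vecw_eq0 hw h3) /eqP; rewrite oner_eq0.
have A0 : A != 0.
  by apply/eqP => /(vecw_eq0 hw h3) /eqP; rewrite oner_eq0.
have NXp n := N_gt0 hN (X0 n).
have NAp := N_gt0 hN A0.
pose lam n := (2 - t n ^+ 3) / (3 * (1 - t n ^+ 3)).
have hp1 n : (p n.+1).1 = (p n).1 * lam n.
  by have [_ e _ _] := onestep (pu n) (t1 n); rewrite ep e.
have ht1 n : t n.+1 = t n * ((1 - 2 * t n ^+ 3) / (2 - t n ^+ 3)).
  by have [_ _ _ e] := onestep (pu n) (t1 n); rewrite /t ep e.
have cu n : cmod (p n).1 != 0 by rewrite cmod_eq0.
have ratio n : N (wn n.+1) / N (wn n) = cmod (lam n) * N (X n.+1) * (N (X n))^-1.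
  rewrite !NW hp1 cmodM; field.
  by rewrite cu gt_eqF.
have cvl : seq_cvg (fun n => cmod (lam n)) (2 / 3).
  apply: (cvg_sqbound (K := c0 ^+ 2 / (9 * (1 - c0) ^+ 2)) k0 kl1 (M := 0%N)).
  move=> n _; set s := t n ^+ 3.
  have ct0 := cmod_ge0 (t n).
  have hs1 : cmod s <= cmod (t n).
    rewrite /s cmodX; have := tc n; have := t1 n; nra.
  have cs0 := cmod_ge0 s.
  have h1s : 1 - cmod s <= cmod (1 - s).
    have := cmodD (1 - s) s; rewrite subrK cmod1; lra.
  have hc1 : c0 < 1 := hc0.
  have s1 : 1 - s != 0.
    rewrite -cmod_eq0 gt_eqF //; have := tc n; lra.
  have e : lam n - 2 / 3 = s / (3 * (1 - s)) by rewrite /lam -/s; field.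
  have d : `|cmod (lam n) - 2 / 3| <= cmod (t n) / (3 * (1 - c0)).
    rewrite -{1}cmod23; apply: le_trans (cmod_dist _ _) _.
    rewrite e (@cmodM _ s) cmodV (@cmodM _ 3) (@cmodn _ 3).
    apply: frac_le => //.
    - lra.
    - have := tc n; lra.
  apply: le_trans (sq_le d) _.
  have hc : 1 - c0 != 0 by rewrite subr_eq0 eq_sym lt_eqF.
  have -> : (cmod (t n) / (3 * (1 - c0))) ^+ 2 =
      cmod (t n) ^+ 2 * (9 * (1 - c0) ^+ 2)^-1 by field.
  rewrite [X in _ <= X](_ : _ = k ^+ n * c0 ^+ 2 * (9 * (1 - c0) ^+ 2)^-1); last by field.
  apply: ler_wpM2r => //; rewrite invr_ge0 mulr_ge0 // exprn_ge0 //; lra.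
have cvX : seq_cvg (fun n => N (X n)) (N A).
  apply: (cvg_sqbound (K := c0 ^+ 2 * N B ^+ 2) k0 kl1 (M := 0%N)).
  move=> n _.
  have d : `|N (X n) - N A| <= cmod (t n) * N B.
    apply: le_trans (Ndist hN _ _) _; rewrite /X /A vecw_sub.
    by case: hN => _ hh _; rewrite hh.
  apply: le_trans (sq_le d) _; rewrite exprMn.
  rewrite [X in _ <= X](_ : _ = k ^+ n * c0 ^+ 2 * N B ^+ 2); last by ring.
  apply: ler_wpM2r; last exact: tb n.
  by apply: exprn_ge0; apply: N_ge0.
have cvX1 : seq_cvg (fun n => N (X n.+1)) (N A).
  apply: (cvg_sqbound (K := k * c0 ^+ 2 * N B ^+ 2) k0 kl1 (M := 0%N)).
  move=> n _.
  have d : `|N (X n.+1) - N A| <= cmod (t n.+1) * N B.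
    apply: le_trans (Ndist hN _ _) _; rewrite /X /A vecw_sub.
    by case: hN => _ hh _; rewrite hh.
  apply: le_trans (sq_le d) _; rewrite exprMn.
  rewrite [X in _ <= X](_ : _ = k ^+ n.+1 * c0 ^+ 2 * N B ^+ 2); last by rewrite [k ^+ n.+1]exprS; ring.
  apply: ler_wpM2r; last exact: tb n.+1.
  by apply: exprn_ge0; apply: N_ge0.
have cvr : seq_cvg (fun n => N (wn n.+1) / N (wn n)) (2 / 3).
  have -> : (fun n => N (wn n.+1) / N (wn n)) =
      (fun n => cmod (lam n) * N (X n.+1) * (N (X n))^-1).
    by apply: funext => n; exact: ratio n.
  have NA0 : N A != 0 by rewrite gt_eqF.
  apply/seq_cvgP.
  have h := cvgM (cvgM (proj1 (seq_cvgP _ _) cvl) (proj1 (seq_cvgP _ _) cvX1))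
                 (cvgV NA0 (proj1 (seq_cvgP _ _) cvX)).
  rewrite mulfK in h => //; exact: (h _ _ _).
split => //.
apply: (cvg_ratio0 (l := 2 / 3)) => //.
- by move=> n; apply: N_gt0.
- lra.
Qed.

Section Omega.
Variable R : realType.
Definition om : R[i] := Complex (- (1 / 2)) (Num.sqrt 3 / 2).

Lemma s3 : Num.sqrt (3 : R) ^+ 2 = 3.
Proof. by rewrite sqr_sqrtr // ler0n. Qed.

Lemma om_rel : om ^+ 2 + om + 1 = 0.
Proof.
have := s3; rewrite expr2 => h.
rewrite expr2 /om; simpc.
move: h; set r := Num.sqrt 3 => h.
apply/eqP; rewrite eq_complex /=; apply/andP; split; apply/eqP.
- have -> : r / 2 * (r / 2) = (r * r) / 4 by field.
  by rewrite h; field.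
- lra.
Qed.

Lemma om_conj : om ^*%C = om ^+ 2.
Proof.
have := s3; rewrite expr2 => h.
rewrite expr2 /om; simpc.
move: h; set r := Num.sqrt 3 => h.
apply/eqP; rewrite eq_complex /=; apply/andP; split; apply/eqP.
- have -> : r / 2 * (r / 2) = (r * r) / 4 by field.
  by rewrite h; field.
- lra.
Qed.

Lemma mulcJ_cmod (x : R[i]) : x * x^*%C = (cmod x ^+ 2)%:C.
Proof.
rewrite cmod2; case: x => a b /=; simpc.
by apply/eqP; rewrite eq_complex /= !expr2 eqxx /= mulrC addNr.
Qed.
Lemma conjM (a b : R[i]) : (a * b)^*%C = a^*%C * b^*%C.
Proof. exact: rmorphM. Qed.
Lemma conjX (a : R[i]) n : (a ^+ n)^*%C = (a^*%C) ^+ n.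
Proof. exact: rmorphXn. Qed.
End Omega.

Theorem theorem3p8 (R : realType) (z : 'rV[R[i]]_3) :
  z 0 0 + z 0 1 + z 0 2 = 0 ->
  ~ (exists (c : R[i]) (v : 'rV[R]_3), z = c *: map_mx (real_complex R) v) ->
  exists w : nat -> 'rV[R[i]]_3,
    (forall n : nat, weierstrass_iter ('X^3 : {poly R[i]}) n z = Some (w n)) /\
    (forall n : nat, w n != 0) /\
    (forall N : 'rV[R[i]]_3 -> R, is_norm N ->
       seq_cvg (fun n => N (w n)) 0 /\
       seq_cvg (fun n => N (w n.+1) / N (w n)) (2 / 3)).
Proof.
move=> hs hnr.
have hw := om_rel R; set w := om R in hw *.
have w3 : w ^+ 3 = 1.
  apply/eqP; rewrite -subr_eq0; apply/eqP.
  have f : w ^+ 3 - 1 = (w - 1) * (w ^+ 2 + w + 1) by ring.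
  by rewrite f hw mulr0.
have e4 : (w ^+ 2) ^+ 2 = w by rewrite -exprM (exprS w 3) w3 mulr1.
have hw' : (w ^+ 2) ^+ 2 + w ^+ 2 + 1 = 0 by rewrite e4 -hw; ring.
have h3 : (3 : R[i]) != 0 by rewrite pnatr_eq0.
have hz := vecw_decomp hw h3 hs.
move: hz; set u := (z 0 0 + z 0 1 * w^+2 + z 0 2 * w) / 3.
set v := (z 0 0 + z 0 1 * w + z 0 2 * w^+2) / 3 => hz.
case: (ltgtP (cmod v) (cmod u)) => huv.
- exact: core hw hs huv.
- apply: core hw' hs _; rewrite e4; exact: huv.
exfalso; apply: hnr; clearbody u v.
have hconj : w^*%C = w ^+ 2 := om_conj R.
pose c := sqrtc (u * v).
have hc2 : c ^+ 2 = u * v := sqr_sqrtc _.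
case: (eqVneq c 0) => hc.
  have uv0 : u * v = 0 by rewrite -hc2 hc expr0n.
  have [u0 v0] : u = 0 /\ v = 0.
    move/eqP: uv0; rewrite mulf_eq0 => /orP [] /eqP e.
      split => //; apply/eqP; rewrite -cmod_eq0 huv e cmod0 //.
    split => //; apply/eqP; rewrite -cmod_eq0 -huv e cmod0 //.
  exists 0, 0; rewrite scale0r hz u0 v0.
  by apply/rowP => k; rewrite !mxE !mul0r addr0.
have hcJ : c^*%C != 0 by rewrite conjc_eq0.
have hcc : c * c^*%C = u * u^*%C.
  rewrite !mulcJ_cmod; congr (_%:C).
  rewrite -cmodX hc2 cmodM huv; ring.
have e : v * c^*%C = c * u^*%C.
  apply: (mulfI hc).
  have e1 : c * (v * c^*%C) = v * (c * c^*%C) by ring.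
  have e2 : c * (c * u^*%C) = c ^+ 2 * u^*%C by ring.
  by rewrite e1 e2 hcc hc2; ring.
have hv : v = c * u^*%C / c^*%C by rewrite -e mulfK.
exists c, (\row_k (2 * complex.Re (u / c * w ^+ k))).
apply/rowP => k; rewrite hz !mxE rmorphM /= rmorph_nat -addcJ.
have -> : (u / c * w ^+ k)^*%C = u^*%C / c^*%C * w ^+ (2 * k).
  by rewrite !conjM conjc_inv conjX hconj exprM.
rewrite hv; field.
by rewrite hc andbT; exact: hcJ.
Qed.
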